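(* For every $\varepsilon\in(0,1)$ there exist $\xi>0$ and $t_0$ such that the following holds for every set $W$ with $|W|=t\ge t_0$. Suppose that for each $3$-subset $R\subseteq W$ we are given a map $\sigma_R:R\to\{0,1\}$. Call a $5$-subset $L\subseteq W$ consistent if for all $3$-subsets $R,S\subseteq L$, $\sigma_R$ and $\sigma_S$ agree on $R\cap S$. If at least $(1-\xi)\binom t5$ of the $5$-subsets of $W$ are consistent, then there is $f:W\to\{0,1\}$ such that $\sigma_R=f|_R$ for all but at most $\varepsilon\binom t3$ of the $3$-subsets $R$ of $W$. *)

(* Defs.v *)
From HB Require Import structures.
From mathcomp Require Import all_boot all_order all_algebra.
Set Implicit Arguments. Unset Strict Implicit. Unset Printing Implicit Defensive.
Import Order.TTheory GRing.Theory Num.Theory.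

(* A system of local maps: to each 3-subset R of W a map sigma R : R -> {0,1},
   represented as sigma R : W -> bool (only values on R matter). *)

Definition consistent (W : finType) (sigma : {set W} -> W -> bool) (L : {set W}) : bool :=
  [forall R : {set W}, forall S : {set W},
     ((R \subset L) && (S \subset L) && (#|R| == 3) && (#|S| == 3)) ==>
     [forall x in R :&: S, sigma R x == sigma S x]].

Definition agrees_with (W : finType) (sigma : {set W} -> W -> bool) (f : W -> bool)
  (R : {set W}) : bool :=
  [forall x in R, sigma R x == f x].

(* Main.v *)
Require Import Defs.
From HB Require Import structures.
From mathcomp Require Import all_boot all_order all_algebra.
Import Order.TTheory GRing.Theory Num.Theory.
Set Implicit Arguments. Unset Strict Implicit. Unset Printing Implicit Defensive.

Lemma card_sumb (I : finType) (A : {set I}) : #|A| = \sum_i ((i \in A) : nat).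
Proof. by rewrite -sum1_card big_mkcond /=; apply: eq_bigr => i _; case: (i \in A). Qed.

Lemma sum_ge1 (I : finType) (P : I -> bool) i0 : P i0 -> 1 <= \sum_i (P i : nat).
Proof. by move=> H; rewrite (bigD1 i0) //= H leq_addr. Qed.

Lemma exists_super (W : finType) (A : {set W}) :
  #|A| <= 5 -> 5 <= #|W| -> exists L : {set W}, (A \subset L) && (#|L| == 5).
Proof.
move=> hA hW.
have : 0 < #|[set B : {set W} | B \subset ~: A & #|B| == 5 - #|A|]|.
  by rewrite cards_draws bin_gt0 leq_subLR cardsC.
case/card_gt0P => B; rewrite inE => /andP[sB /eqP cB].
exists (A :|: B); rewrite subsetUl /=.
have dAB : A :&: B = set0.
  apply/setP => y; rewrite !inE; apply/negP => /andP[yA yB].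
  by move: (subsetP sB y yB); rewrite inE yA.
have := cardsUI A B; rewrite dAB cards0 addn0 cB => ->.
by rewrite subnKC.
Qed.

Lemma binom_ineq t : 10 * 'C(t, 5) <= 'C(t, 3) * 'C(t.-1, 2).
Proof.
rewrite -(@leq_pmul2r 12) //.
have e1 := bin_ffact t 5. have e2 := bin_ffact t 3. have e3 := bin_ffact t.-1 2.
have -> : 10 * 'C(t, 5) * 12 = 'C(t, 5) * 5`! by rewrite (mulnC 10) -mulnA.
have -> : 'C(t, 3) * 'C(t.-1, 2) * 12 = ('C(t, 3) * 3`!) * ('C(t.-1, 2) * 2`!).
  by rewrite mulnACA.
rewrite e1 e2 e3.
case: t {e1 e2 e3} => [|[|[|[|t]]]] //.
rewrite !ffactnS /= !ffactn0 !muln1.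
rewrite -mulnA; apply: leq_mul => //; rewrite mulnA; apply: leq_mul => //.
apply: leq_mul; apply: leq_trans (leqnSn _) (leqnSn _).
Qed.

Definition T3 (W : finType) (x : W) : {set {set W}} :=
  [set R : {set W} | (#|R| == 3) && (x \in R)].
Definition fmaj (W : finType) (sigma : {set W} -> W -> bool) (x : W) : bool :=
  #|T3 x :\: [set R | sigma R x]| <= #|T3 x :&: [set R | sigma R x]|.
Definition Gs (W : finType) (sigma : {set W} -> W -> bool) (x : W) :=
  T3 x :&: [set R | sigma R x == fmaj sigma x].
Definition Bs (W : finType) (sigma : {set W} -> W -> bool) (x : W) :=
  T3 x :\: [set R | sigma R x == fmaj sigma x].
Definition Inc (W : finType) (sigma : {set W} -> W -> bool) :=
  [set L : {set W} | (#|L| == 5) && ~~ consistent sigma L].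
Definition DL (W : finType) (L : {set W}) :=
  [set R : {set W} | R \subset L & #|R| == 3].

Lemma BG_le (W : finType) (sigma : {set W} -> W -> bool) x :
  #|Bs sigma x| <= #|Gs sigma x|.
Proof.
rewrite /Bs /Gs; case E: (fmaj sigma x).
  have -> : [set R | sigma R x == true] = [set R | sigma R x].
    by apply/setP => R; rewrite !inE eqb_id.
  exact: E.
have -> : [set R | sigma R x == false] = ~: [set R | sigma R x].
  by apply/setP => R; rewrite !inE eqbF_neg.
rewrite setDE setCK -setDE.
by move: E; rewrite /fmaj => /negbT; rewrite -ltnNge => /ltnW.
Qed.

Lemma BG_sum (W : finType) (sigma : {set W} -> W -> bool) x :
  #|Bs sigma x| + #|Gs sigma x| = #|T3 x|.
Proof. by rewrite addnC cardsID. Qed.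

Lemma card_T3 (W : finType) (x : W) : #|T3 x| = 'C(#|W|.-1, 2).
Proof.
have -> : T3 x = (fun B => x |: B) @: [set B : {set W} | B \subset [set~ x] & #|B| == 2].
  apply/setP => R; rewrite !inE; apply/andP/imsetP.
    case=> /eqP c3 xR; exists (R :\ x); last by rewrite setD1K.
    rewrite inE; apply/andP; split.
      by apply/subsetP => y; rewrite !inE => /andP[].
    by have := cardsD1 x R; rewrite xR c3 add1n => -[<-].
  case=> B; rewrite inE => /andP[sB /eqP c2] ->.
  have xB : x \notin B by apply/negP => /(subsetP sB); rewrite !inE eqxx.
  by rewrite cardsU1 xB c2 setU11.
rewrite card_in_imset; last first.
  move=> B1 B2; rewrite !inE => /andP[s1 _] /andP[s2 _] e.
  have n1 : x \notin B1 by apply/negP => /(subsetP s1); rewrite !inE eqxx.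
  have n2 : x \notin B2 by apply/negP => /(subsetP s2); rewrite !inE eqxx.
  by rewrite -(setU1K n1) e setU1K.
by rewrite cards_draws cardsC1.
Qed.

Lemma bad_le (W : finType) (sigma : {set W} -> W -> bool) :
  #|[set R : {set W} | (#|R| == 3) & ~~ agrees_with sigma (fmaj sigma) R]|
    <= \sum_x #|Bs sigma x|.
Proof.
under eq_bigr => x _ do rewrite (card_sumb (Bs sigma x)).
rewrite card_sumb.
rewrite exchange_big /=; apply: leq_sum => R _.
case H: (R \in _) => //.
move: H; rewrite inE => /andP[c3 /forallPn [y]]; rewrite negb_imply => /andP[yR ne].
change (0 < \sum_i ((R \in Bs sigma i) : nat)).
by apply: (sum_ge1 (i0 := y)); rewrite /Bs /T3 !inE c3 yR ne.
Qed.

Definition term (W : finType) (sigma : {set W} -> W -> bool) (x : W) (R S L : {set W}) : nat :=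
  [&& L \in Inc sigma, x \in L, R \in DL L & S \in DL L].

Lemma count_main (W : finType) (sigma : {set W} -> W -> bool) :
  5 <= #|W| -> \sum_x #|Bs sigma x| * #|Gs sigma x| <= 500 * #|Inc sigma|.
Proof.
move=> hW.
have step1 x : #|Bs sigma x| * #|Gs sigma x|
    = \sum_R \sum_S ((R \in Bs sigma x) * (S \in Gs sigma x)).
  by rewrite (card_sumb (Bs sigma x)) (card_sumb (Gs sigma x)) big_distrl;
     apply: eq_bigr => R _; rewrite big_distrr.
under eq_bigr do rewrite step1.
apply: (@leq_trans (\sum_x \sum_R \sum_S \sum_L term sigma x R S L)).
  apply: leq_sum => x _; apply: leq_sum => R _; apply: leq_sum => S _.
  case hR: (R \in Bs sigma x) => //; case hS: (S \in Gs sigma x) => //.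
  rewrite muln1.
  move: hR hS; rewrite /Bs /Gs /T3 !inE => /andP[nR /andP[c3R xR]] /andP[/andP[c3S xS] eS].
  have hU : #|R :|: S| <= 5.
    have h := cardsUI R S; rewrite (eqP c3R) (eqP c3S) in h.
    have hI : 0 < #|R :&: S| by apply/card_gt0P; exists x; rewrite inE xR xS.
    rewrite -(leq_add2r #|R :&: S|) h (addnC 5) -[3 + 3]/(1 + 5) leq_add2r.
    exact: hI.
  case: (exists_super hU hW) => L /andP[sL /eqP cL].
  have sRL : R \subset L by apply: subset_trans sL; apply: subsetUl.
  have sSL : S \subset L by apply: subset_trans sL; apply: subsetUr.
  apply: (sum_ge1 (i0 := L)).
  rewrite /DL !inE sRL sSL c3R c3S cL eqxx (subsetP sRL x xR) /= !andbT.
  apply/negP => /forallP /(_ R) /forallP /(_ S).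
  rewrite sRL sSL c3R c3S /= => /forallP /(_ x); rewrite inE xR xS /= => /eqP e.
  by move: nR; rewrite e eS.
have ex : \sum_x \sum_R \sum_S \sum_L term sigma x R S L
    = \sum_L \sum_x \sum_R \sum_S term sigma x R S L.
  under eq_bigr => x _ do under eq_bigr => R _ do rewrite exchange_big.
  under eq_bigr => x _ do rewrite exchange_big.
  by rewrite exchange_big.
rewrite ex (card_sumb (Inc sigma)) big_distrr; apply: leq_sum => L _.
case hL: (L \in Inc sigma); last first.
  rewrite big1 // => x _; rewrite big1 // => R _; rewrite big1 // => S _.
  by rewrite /term hL.
have cL : #|L| = 5 by move: hL; rewrite inE => /andP[/eqP].
have e : forall x R S, term sigma x R S L = (x \in L) * ((R \in DL L) * (S \in DL L)).
  by move=> x R S; rewrite /term hL /=; case: (x \in L); case: (R \in DL L); case: (S \in DL L).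
under eq_bigr => x _ do under eq_bigr => R _ do under eq_bigr => S _ do rewrite e.
under eq_bigr => x _ do under eq_bigr => R _ do rewrite -big_distrr /=.
under eq_bigr => x _ do rewrite -big_distrr /=.
rewrite -big_distrl /= -!card_sumb.
under eq_bigr => R _ do rewrite -big_distrr /=.
rewrite -big_distrl /= -!card_sumb /DL cards_draws cL.
by [].
Qed.

Lemma nat_main (W : finType) (sigma : {set W} -> W -> bool) :
  5 <= #|W| ->
  'C(#|W|.-1, 2) * #|[set R : {set W} | (#|R| == 3) & ~~ agrees_with sigma (fmaj sigma) R]|
    <= 1000 * #|Inc sigma|.
Proof.
move=> hW.
apply: (@leq_trans ('C(#|W|.-1, 2) * \sum_x #|Bs sigma x|)).
  by rewrite leq_mul2l bad_le orbT.
rewrite big_distrr /=.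
apply: (@leq_trans (\sum_x 2 * (#|Bs sigma x| * #|Gs sigma x|))).
  apply: leq_sum => x _.
  rewrite -(card_T3 x) -(BG_sum sigma x) mulnDl mulnA (mulnC 2) -mulnA.
  by rewrite mul2n -addnn mulnDr (mulnC #|Gs _ _|) leq_add2r leq_mul2l BG_le orbT.
rewrite -big_distrr /=.
apply: leq_trans (leq_mul (leqnn 2) (count_main sigma hW)) _.
by rewrite mulnA.
Qed.

Lemma cons_inc (W : finType) (sigma : {set W} -> W -> bool) :
  #|[set L : {set W} | (#|L| == 5) & consistent sigma L]| + #|Inc sigma| = 'C(#|W|, 5).
Proof.
rewrite -card_draws -(cardsID [set L : {set W} | consistent sigma L] [set A : {set W} | #|A| == 5]).
by congr (_ + _); apply: eq_card => L; rewrite !inE // andbC.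
Qed.

Local Open Scope ring_scope.

Theorem lemma6 (F : realFieldType) (eps : F) (heps0 : 0 < eps) (heps1 : eps < 1) :
  exists xi : F, 0 < xi /\
  exists t0 : nat,
  forall (W : finType), (t0 <= #|W|)%N ->
  forall sigma : {set W} -> W -> bool,
    (1 - xi) * ('C(#|W|, 5))%:R
      <= (#|[set L : {set W} | (#|L| == 5)%N & consistent sigma L]|)%:R ->
    exists f : W -> bool,
      (#|[set R : {set W} | (#|R| == 3)%N & ~~ agrees_with sigma f R]|)%:R
        <= eps * ('C(#|W|, 3))%:R.
Proof.
have h1000 : (1000 : F) != 0 by rewrite pnatr_eq0.
exists (eps / 1000); split; first by rewrite divr_gt0 // ltr0n.
exists 5%N => W hW sigma hcons; exists (fmaj sigma).
set bad := #|[set R : {set W} | _ & _]|.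
set cons := #|[set L : {set W} | _ & _]| in hcons.
set m := 'C(#|W|.-1, 2).
have hm : (0 < m)%N.
  rewrite /m bin_gt0 -ltnS (ltn_predK hW); exact: leq_trans _ hW.
have hnat := nat_main sigma hW.
have hci := cons_inc sigma.
have hb := binom_ineq #|W|.
have e : (cons%:R : F) = ('C(#|W|, 5))%:R - (#|Inc sigma|)%:R.
  by rewrite -hci natrD addrK.
rewrite e mulrBl mul1r lerD2l lerN2 in hcons.
rewrite -(@ler_pM2l _ m%:R); last by rewrite ltr0n.
apply: (@le_trans _ _ (1000 * (#|Inc sigma|)%:R)).
  by move: hnat; rewrite -(ler_nat F) !natrM.
apply: (@le_trans _ _ (1000 * (eps / 1000 * ('C(#|W|, 5))%:R))).
  by rewrite ler_pM2l // ltr0n.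
rewrite mulrA mulrCA mulfV // mulr1 mulrCA ler_pM2l //.
apply: (@le_trans _ _ (10 * 'C(#|W|, 5))%N%:R).
  by rewrite ler_nat leq_pmull.
by rewrite -natrM ler_nat (mulnC m).
Qed.
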